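(* Let $p>1$, let $\varphi:\mathbb{R}^n\to\mathbb{R}\cup\{+\infty\}$ be proper and lower semicontinuous. Then: (a) for each $\gamma>0$, $\inf_{y}\varphi^p_\gamma(y)=\inf_y\varphi(y)$; (b) for $\gamma>0$, if $\operatorname{prox}^p_{\gamma\varphi}(x)\neq\emptyset$ for every $x\in\mathbb{R}^n$ and $\inf_y\varphi(y)\neq-\infty$, then $\operatorname{argmin}\varphi^p_\gamma=\operatorname{argmin}\varphi$; (c) if $\varphi$ is high-order prox-bounded with threshold $\gamma^{\varphi,p}>0$ and $\inf\varphi\neq-\infty$, then for each $\gamma\in(0,\gamma^{\varphi,p})$, $\operatorname{argmin}\varphi^p_\gamma=\operatorname{argmin}\varphi$; (d) for each $\gamma>0$, $\operatorname{argmin}\varphi\subseteq\mathrm{Fix}(\operatorname{prox}^p_{\gamma\varphi})\subseteq\mathrm{Fcrit}(\varphi)\subseteq\mathrm{Mcrit}(\varphi)$; (e) if $\varphi$ is high-order prox-bounded with threshold $\gamma^{\varphi,p}>0$ and $\inf\varphi\neq-\infty$, then for each $\gamma\in(0,\gamma^{\varphi,p})$, $\operatorname{argmin}\varphi\subseteq\mathrm{Fcrit}(\varphi^p_\gamma)\subseteq\mathrm{Fix}(\operatorname{prox}^p_{\gamma\varphi})\subseteq\mathrm{Fcrit}(\varphi)\subseteq\mathrm{Mcrit}(\varphi)$.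
   Context: $\operatorname{prox}^p_{\gamma\varphi}(x):=\operatorname{argmin}_{y}\big(\varphi(y)+\frac{1}{p\gamma}\|x-y\|^p\big)$, $\varphi^p_\gamma(x):=\inf_{y}\big(\varphi(y)+\frac{1}{p\gamma}\|x-y\|^p\big)$. $\varphi$ is high-order prox-bounded (order $p$) if $\varphi^p_\gamma(x)>-\infty$ for some $\gamma>0,x$; the supremum of such $\gamma$ is the threshold $\gamma^{\varphi,p}$. $\mathrm{Fix}(\operatorname{prox}^p_{\gamma\varphi})=\{x: x\in\operatorname{prox}^p_{\gamma\varphi}(x)\}$ (proximal fixed points). For a proper lsc $h$, $\mathrm{Fcrit}(h)=\{x\in\operatorname{dom}h:0\in\hat\partial h(x)\}$ and $\mathrm{Mcrit}(h)=\{x\in\operatorname{dom}h:0\in\partial h(x)\}$, where $\hat\partial$ and $\partial$ are the Fréchet and Mordukhovich (limiting) subdifferentials. *)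

(* Defs.v *)
From HB Require Import structures.
From mathcomp Require Import all_boot all_order all_algebra.
From mathcomp Require Import all_classical all_reals all_analysis.
Set Implicit Arguments. Unset Strict Implicit. Unset Printing Implicit Defensive.
Import Order.TTheory GRing.Theory Num.Theory.
Local Open Scope classical_set_scope.
Local Open Scope ring_scope.

Section Defs.
Context {R : realType} {n : nat}.
Local Notation V := 'rV[R]_n.

Definition dotv (u v : V) : R := \sum_(i < n) u ord0 i * v ord0 i.
Definition enorm (u : V) : R := Num.sqrt (dotv u u).

Definition proper_fun (f : V -> \bar R) : Prop :=
  (forall x, f x != -oo%E) /\ exists x, f x \is a fin_num.

Definition lsc (f : V -> \bar R) : Prop :=
  forall (x : V) (a : R), (a%:E < f x)%E ->
    exists2 d : R, 0 < d & forall y, enorm (y - x) < d -> (a%:E < f y)%E.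

Definition einf (f : V -> \bar R) : \bar R := ereal_inf (range f).
Definition argmin (f : V -> \bar R) : set V := [set x | forall y, (f x <= f y)%E].

Definition hcost (p gamma : R) (x y : V) : R := (enorm (x - y)) `^ p / (p * gamma).

Definition moreau (p gamma : R) (f : V -> \bar R) (x : V) : \bar R :=
  ereal_inf (range (fun y => (f y + (hcost p gamma x y)%:E)%E)).

Definition prox (p gamma : R) (f : V -> \bar R) (x : V) : set V :=
  [set y | forall z, (f y + (hcost p gamma x y)%:E <= f z + (hcost p gamma x z)%:E)%E].

Definition prox_bounded (p : R) (f : V -> \bar R) : Prop :=
  exists gamma : R, 0 < gamma /\ exists x, (-oo < moreau p gamma f x)%E.
Definition prox_threshold (p : R) (f : V -> \bar R) : \bar R :=
  ereal_sup [set gamma%:E | gamma in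
     [set gamma : R | 0 < gamma /\ exists x, (-oo < moreau p gamma f x)%E]].

Definition prox_fix (p gamma : R) (f : V -> \bar R) : set V :=
  [set x | prox p gamma f x x].

Definition frechet_subdiff (h : V -> \bar R) (x : V) : set V :=
  [set v | h x \is a fin_num /\
     forall e : R, 0 < e -> exists2 d : R, 0 < d & forall y, enorm (y - x) < d ->
       (h x + (dotv v (y - x) - e * enorm (y - x))%:E <= h y)%E].

Definition seq_cvgV (u : nat -> V) (a : V) : Prop :=
  forall e : R, 0 < e -> exists N, forall k, (N <= k)%N -> enorm (u k - a) < e.

Definition limiting_subdiff (h : V -> \bar R) (x : V) : set V :=
  [set v | h x \is a fin_num /\
     exists (xs vs : nat -> V),
       [/\ seq_cvgV xs x,
           (forall e : R, 0 < e -> exists N, forall k, (N <= k)%N ->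
              h (xs k) \is a fin_num /\ `|fine (h (xs k)) - fine (h x)| < e),
           (forall k, frechet_subdiff h (xs k) (vs k)) &
           seq_cvgV vs v]].

Definition Fcrit (h : V -> \bar R) : set V :=
  [set x | h x \is a fin_num /\ frechet_subdiff h x 0].
Definition Mcrit (h : V -> \bar R) : set V :=
  [set x | h x \is a fin_num /\ limiting_subdiff h x 0].

End Defs.

(* Main.v *)
Require Import Defs.
From HB Require Import structures.
From mathcomp Require Import all_boot all_order all_algebra.
From mathcomp Require Import all_classical all_reals all_analysis.
From mathcomp Require Import lra ring.
Import Order.TTheory GRing.Theory Num.Theory.
Local Open Scope classical_set_scope.
Local Open Scope ring_scope.

Section Helpers.
Context {R : realType} {n : nat}.
Local Notation V := 'rV[R]_n.
Implicit Types (u v x y z : V) (phi : V -> \bar R).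

Lemma dotv0l v : dotv 0 v = 0.
Proof. by rewrite /dotv big1 // => i _; rewrite mxE mul0r. Qed.

Lemma dotvZ a u : dotv (a *: u) (a *: u) = a ^+ 2 * dotv u u.
Proof.
rewrite /dotv mulr_sumr; apply: eq_bigr => i _; rewrite !mxE.
by rewrite expr2 -!mulrA; congr (_ * _); rewrite mulrCA.
Qed.

Lemma dotv_ge0 u : 0 <= dotv u u.
Proof. by apply: sumr_ge0 => i _; rewrite -expr2 sqr_ge0. Qed.

Lemma enorm_ge0 u : 0 <= enorm u.
Proof. exact: sqrtr_ge0. Qed.

Lemma enorm0 : enorm (0 : V) = 0.
Proof. by rewrite /enorm dotv0l sqrtr0. Qed.

Lemma enormZ a u : enorm (a *: u) = `|a| * enorm u.
Proof. by rewrite /enorm dotvZ sqrtrM ?sqr_ge0 // sqrtr_sqr. Qed.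

Lemma enormB u v : enorm (u - v) = enorm (v - u).
Proof. by rewrite -opprB -scaleN1r enormZ normrN normr1 mul1r. Qed.

Lemma hcost_ge0 p g x y : 0 < p -> 0 < g -> 0 <= hcost p g x y.
Proof.
move=> hp hg; rewrite /hcost divr_ge0 ?powR_ge0 //.
by rewrite mulr_ge0 // ltW.
Qed.

Lemma hcost_xx p g x : 0 < p -> hcost p g x x = 0.
Proof. by move=> hp; rewrite /hcost subrr enorm0 powR0 ?mul0r // gt_eqF. Qed.

Lemma moreau_le p g phi x y : (moreau p g phi x <= phi y + (hcost p g x y)%:E)%E.
Proof. by apply: ereal_inf_lbound; exists y. Qed.

Lemma moreau_ge p g phi x a :
  (forall y, (a <= phi y + (hcost p g x y)%:E)%E) -> (a <= moreau p g phi x)%E.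
Proof. by move=> H; apply/ereal_infP => _ [y _ <-]. Qed.

Lemma ereal_between (a b : \bar R) : a \is a fin_num -> (a < b)%E ->
  exists r : R, (a < r%:E)%E /\ (r%:E < b)%E.
Proof.
move/fineK => <-; set a0 := fine a; case: b => [b0||] //.
- rewrite lte_fin => h; exists ((a0 + b0) / 2); rewrite !lte_fin; split; lra.
- move=> _; exists (a0 + 1); rewrite ltry lte_fin; split => //; lra.
Qed.


Lemma einf_lb phi y : (einf phi <= phi y)%E.
Proof. by apply: ereal_inf_lbound; exists y. Qed.

Lemma part_a p g phi : 0 < p -> 0 < g -> einf (moreau p g phi) = einf phi.
Proof.
move=> hp hg; apply/le_anti/andP; split.
- apply/ereal_infP => _ [y _ <-].
  apply: (le_trans (einf_lb _ y)).
  by have := moreau_le p g phi y y; rewrite hcost_xx // adde0.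
- apply/ereal_infP => _ [x _ <-]; apply: moreau_ge => y.
  apply: (le_trans (einf_lb _ y)); apply: leeDl; rewrite lee_fin.
  exact: hcost_ge0.
Qed.

Lemma argmin_eq p g phi : 1 < p -> 0 < g -> lsc phi -> einf phi != -oo%E ->
  argmin (moreau p g phi) = argmin phi.
Proof.
move=> hp1 hg hlsc hinf; have hp : 0 < p by lra.
apply/seteqP; split => x; last first.
  move=> hx y /=.
  apply: (@le_trans _ _ (phi x)).
    by have := moreau_le p g phi x x; rewrite hcost_xx // adde0.
  apply: moreau_ge => z; apply: (le_trans (hx z)); apply: leeDl.
  by rewrite lee_fin hcost_ge0.
move=> hx y /=; rewrite leNgt; apply/negP => hlt.
have hmy := einf_lb phi y.
have hmx : (einf phi < phi x)%E by apply: le_lt_trans hlt.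
have hfin : einf phi \is a fin_num.
  rewrite fin_numE hinf /=; apply/eqP => h; move: hmx; rewrite h.
  by rewrite ltNge leey.
have [r [hr1 hr2]] := ereal_between _ _ hfin hmx.
have [d hd0 hd] := hlsc x r hr2.
set m := fine (einf phi).
have hm : einf phi = m%:E by rewrite fineK.
set del := d `^ p / (p * g).
have hdel : 0 < del by rewrite divr_gt0 ?powR_gt0 // mulr_gt0.
have hle1 : (moreau p g phi x <= m%:E)%E.
  rewrite -hm /einf; apply/ereal_infP => _ [z _ <-].
  apply: (le_trans (hx z)).
  have := moreau_le p g phi z z; rewrite hcost_xx; last exact: hp.
  by rewrite adde0.
have hle2 : ((Num.min r (m + del))%:E <= moreau p g phi x)%E.
  apply: moreau_ge => z.
  have [hz|hz] := ltP (enorm (z - x)) d.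
    apply: (@le_trans _ _ (phi z)); last by apply: leeDl; rewrite lee_fin hcost_ge0.
    apply: ltW; apply: le_lt_trans (hd z hz); rewrite lee_fin; by rewrite ge_min lexx.
  rewrite (@le_trans _ _ (m%:E + del%:E)%E) //.
    by rewrite -EFinD lee_fin ge_min lexx orbT.
  apply: leeD; first by rewrite -hm; exact: einf_lb.
  rewrite lee_fin /del /hcost ler_pM2r ?invr_gt0 ?mulr_gt0 //.
  rewrite enormB; apply: ge0_ler_powR => //; first exact: ltW.
    by rewrite nnegrE ltW.
  by rewrite nnegrE enorm_ge0.
have := le_trans hle2 hle1; rewrite lee_fin ge_min => /orP[]; last by lra.
move: hr1; rewrite hm lte_fin; lra.
Qed.



Lemma fin_of_le phi x (b : R) : proper_fun phi -> (phi x <= b%:E)%E -> phi x \is a fin_num.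
Proof.
move=> [hN _] hb; rewrite fin_numE hN /=; apply/eqP => h; move: hb; rewrite h.
by rewrite leye_eq.
Qed.

Lemma fcrit_mcrit (h : V -> \bar R) : Fcrit h `<=` Mcrit h.
Proof.
move=> x [hf hF]; split => //; split => //.
exists (fun=> x), (fun=> 0); split => //.
- by move=> e he; exists 0%N => k _; rewrite subrr enorm0.
- by move=> e he; exists 0%N => k _; split => //; rewrite subrr normr0.
- by move=> e he; exists 0%N => k _; rewrite subrr enorm0.
Qed.

Lemma argmin_fix p g phi : 0 < p -> 0 < g -> argmin phi `<=` prox_fix p g phi.
Proof.
move=> hp hg x hx z /=; rewrite hcost_xx; last exact: hp.
rewrite adde0; apply: (le_trans (hx z)); apply: leeDl.
by rewrite lee_fin hcost_ge0.
Qed.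

Lemma fix_fcrit p g phi : 1 < p -> 0 < g -> proper_fun phi ->
  prox_fix p g phi `<=` Fcrit phi.
Proof.
move=> hp1 hg hpr x hx; have hp : 0 < p by lra.
have H : forall z, (phi x <= phi z + (hcost p g x z)%:E)%E.
  move=> z; have := hx z; rewrite hcost_xx; last exact: hp.
  by rewrite adde0.
have hfx : phi x \is a fin_num.
  move: (hpr) => [hN [z0 hz0]]; have := H z0; rewrite -(fineK hz0) -EFinD.
  exact: fin_of_le hpr.
split => //; split => // e he.
set d := (e * p * g) `^ ((p - 1)^-1).
have hepg : 0 < e * p * g by rewrite !mulr_gt0.
exists d; first by rewrite powR_gt0.
move=> y hy; rewrite dotv0l.
set t := enorm (y - x).
have ht0 : 0 <= t by exact: enorm_ge0.
have hc : hcost p g x y <= e * t.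
  rewrite /hcost enormB -/t ler_pdivrMr ?mulr_gt0 //.
  rewrite -(mulr_powRB1 ht0 hp).
  have : t `^ (p - 1) <= e * p * g.
    have -> : e * p * g = d `^ (p - 1).
      rewrite /d -powRrM mulVf ?powRr1 //; first by rewrite ltW.
      by rewrite gt_eqF // subr_gt0.
    apply: ge0_ler_powR; first by rewrite subr_ge0 ltW.
    - by rewrite nnegrE.
    - by rewrite nnegrE ltW // powR_gt0.
    - exact: ltW.
  move=> h; have h2 := ler_wpM2l ht0 h.
  apply: (le_trans h2); rewrite !mulrA [t * e]mulrC; exact: lexx.
have := H y; move: hfx; move/fineK => <-.
case: (phi y) => [b||] //.
- rewrite -!EFinD !lee_fin => h; lra.
- by move=> _; rewrite leey.
Qed.


Lemma argmin_fcritm p g phi : 0 < p -> 0 < g -> proper_fun phi ->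
  argmin phi `<=` Fcrit (moreau p g phi).
Proof.
move=> hp hg hpr x hx.
have hfx : phi x \is a fin_num.
  move: (hpr) => [hN [z0 hz0]]; have := hx z0; rewrite -(fineK hz0).
  exact: fin_of_le hpr.
have hge : forall y, (phi x <= moreau p g phi y)%E.
  move=> y; apply: moreau_ge => z; apply: (le_trans (hx z)); apply: leeDl.
  by rewrite lee_fin hcost_ge0.
have hmx : moreau p g phi x = phi x.
  apply/le_anti/andP; split; last exact: hge.
  have := moreau_le p g phi x x; rewrite hcost_xx; last exact: hp.
  by rewrite adde0.
have hf : moreau p g phi x \is a fin_num by rewrite hmx.
split => //; split => // e he; exists 1 => // y _.
rewrite dotv0l hmx; apply: le_trans (hge y).
rewrite -(fineK hfx) -EFinD lee_fin.
have : 0 <= e * enorm (y - x) by rewrite mulr_ge0 ?enorm_ge0 // ltW.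
lra.
Qed.


Lemma fcritm_fix p g phi : 1 < p -> 0 < g -> lsc phi -> einf phi != -oo%E ->
  Fcrit (moreau p g phi) `<=` prox_fix p g phi.
Proof.
move=> hp1 hg hlsc hinf; have hp : 0 < p by lra.
move=> x [hfM [_ HF]].
suff hsuf : (phi x <= moreau p g phi x)%E.
  move=> z /=; rewrite hcost_xx; last exact: hp.
  by rewrite adde0; apply: le_trans hsuf (moreau_le _ _ _ _ _).
rewrite leNgt; apply/negP => hlt.
set M := fine (moreau p g phi x).
have hM : moreau p g phi x = M%:E by rewrite fineK.
have hmM : (einf phi <= M%:E)%E.
  rewrite -hM; apply: moreau_ge => z; apply: (le_trans (einf_lb _ z)).
  by apply: leeDl; rewrite lee_fin hcost_ge0.
have hfin : einf phi \is a fin_num.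
  rewrite fin_numE hinf /=; apply/eqP => h; move: hmM; rewrite h.
  by rewrite leye_eq.
set mf := fine (einf phi).
have hmf : einf phi = mf%:E by rewrite fineK.
have hmfM : mf <= M by rewrite -lee_fin -hmf.
have hMx : (M%:E < phi x)%E by rewrite -hM.
have [r [hr1 hr2]] := ereal_between _ _ (isT : M%:E \is a fin_num) hMx.
move: hr1; rewrite lte_fin => hr1.
have [del hdel0 hdel] := hlsc x r hr2.
set K := M + 1 - mf.
set Dmax := Num.max 1 (p * g * K).
have hDmax1 : 1 <= Dmax by rewrite le_max lexx.
have hDmax0 : 0 < Dmax by apply: lt_le_trans ltr01 hDmax1.
have hKle : p * g * K <= Dmax by rewrite le_max lexx orbT.
set cmin := del `^ p / (p * g).
have hcmin : 0 < cmin by rewrite divr_gt0 ?powR_gt0 // mulr_gt0.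
set e := cmin / (2 * Dmax).
have he : 0 < e by rewrite divr_gt0 // mulr_gt0.
have heD : e * Dmax = cmin / 2.
  rewrite /e; field; rewrite gt_eqF //.
have [d hd0 Hd] := HF e he.
set s := Num.min (2^-1) (d / (2 * Dmax)).
have hs0 : 0 < s.
  by rewrite lt_min; apply/andP; split; rewrite ?invr_gt0 ?ltr0n // divr_gt0 // mulr_gt0.
have hs1 : s <= 2^-1 by rewrite ge_min lexx.
have hs2 : s * (2 * Dmax) <= d.
  rewrite -ler_pdivlMr ?mulr_gt0 //; by rewrite ge_min lexx orbT.
set eta := Num.min (Num.min 1 (r - M)) (s * cmin / 2).
have heta1 : eta <= 1 by rewrite ge_min ge_min lexx.
have heta2 : eta <= r - M by rewrite ge_min ge_min lexx orbT.
have heta3 : eta <= s * cmin / 2 by rewrite ge_min lexx orbT.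
have heta0 : 0 < eta.
  rewrite lt_min lt_min; apply/andP; split; first (apply/andP; split).
  - exact: ltr01.
  - by rewrite subr_gt0.
  - by rewrite divr_gt0 // mulr_gt0.
have : (moreau p g phi x < (M + eta)%:E)%E by rewrite hM lte_fin; lra.
rewrite {1}/moreau => /ereal_inf_ltP [_ [y _ <-] hy].
have hby : (mf%:E <= phi y)%E by rewrite -hmf einf_lb.
set c := hcost p g x y.
have hc0 : 0 <= c by apply: hcost_ge0.
case Ey : (phi y) hy hby => [b||] //.
rewrite -EFinD !lte_fin lee_fin => hy hby.
rewrite -/c in hy.
set D := enorm (x - y).
have hD0 : 0 <= D by apply: enorm_ge0.
have hcD : c = D `^ p / (p * g) by [].
have hpg : 0 < p * g by rewrite mulr_gt0.
have hDdel : del <= D.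
  rewrite leNgt; apply/negP => hD.
  have := hdel y; rewrite enormB Ey lte_fin => /(_ hD) hr; lra.
have hcge : cmin <= c.
  rewrite hcD /cmin ler_pM2r ?invr_gt0 //.
  apply: ge0_ler_powR => //; first exact: ltW.
  - by rewrite nnegrE ltW.
have hcK : D `^ p < p * g * K.
  have : c < K by rewrite /K; lra.
  by rewrite hcD ltr_pdivrMr // mulrC.
have hDle : D <= Dmax.
  case: (leP D 1) => hD1; first exact: le_trans hD1 hDmax1.
  have := le1r_powR (ltW hD1) (ltW hp1); lra.
set x' := x + s *: (y - x).
have hx'x : x' - x = s *: (y - x).
  by apply/rowP => i; rewrite !mxE /=; ring.
have hx'y : x' - y = (1 - s) *: (x - y).
  by apply/rowP => i; rewrite !mxE /=; ring.
have hn1 : enorm (x' - x) = s * D.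
  by rewrite hx'x enormZ ger0_norm ?(ltW hs0) // enormB.
have hs1' : 0 < 1 - s by lra.
have hn2 : enorm (x' - y) = (1 - s) * D.
  by rewrite hx'y enormZ ger0_norm // ltW.
have hsD : s * D <= s * Dmax by apply: ler_wpM2l; [exact: ltW | exact: hDle].
have hlt_d : enorm (x' - x) < d by rewrite hn1; lra.
have := Hd x' hlt_d; rewrite dotv0l hM.
have hm' := moreau_le p g phi x' y; rewrite Ey in hm'.
move=> /le_trans /(_ hm'); rewrite -!EFinD lee_fin hn1 => hA.
have hB : hcost p g x' y <= (1 - s) * c.
  rewrite /hcost hn2 hcD mulrA; apply: ler_wpM2r; first by rewrite invr_ge0 ltW.
  apply: ge1r_powRZ => //; [apply/andP; split => //; lra | exact: ltW].
have hE : e * (s * D) <= s * cmin / 2.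
  have : e * D <= e * Dmax by apply: ler_wpM2l; [exact: ltW | exact: hDle].
  rewrite heD => h.
  have := ler_wpM2l (ltW hs0) h; lra.
have hF : s * cmin <= s * c by apply: ler_wpM2l; [exact: ltW | exact: hcge].
lra.
Qed.

End Helpers.

Theorem theorem2 (R : realType) (n : nat) (p : R) (phi : 'rV[R]_n -> \bar R) :
  1 < p -> proper_fun phi -> lsc phi ->
  (* (a) *)
  (forall gamma : R, 0 < gamma -> einf (moreau p gamma phi) = einf phi) /\
  (* (b) *)
  (forall gamma : R, 0 < gamma ->
     (forall x, prox p gamma phi x !=set0) -> einf phi != -oo%E ->
     argmin (moreau p gamma phi) = argmin phi) /\
  (* (c) *)
  (prox_bounded p phi -> (0%:E < prox_threshold p phi)%E -> einf phi != -oo%E ->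
     forall gamma : R, 0 < gamma -> (gamma%:E < prox_threshold p phi)%E ->
     argmin (moreau p gamma phi) = argmin phi) /\
  (* (d) *)
  (forall gamma : R, 0 < gamma ->
     [/\ argmin phi `<=` prox_fix p gamma phi,
         prox_fix p gamma phi `<=` Fcrit phi &
         Fcrit phi `<=` Mcrit phi]) /\
  (* (e) *)
  (prox_bounded p phi -> (0%:E < prox_threshold p phi)%E -> einf phi != -oo%E ->
     forall gamma : R, 0 < gamma -> (gamma%:E < prox_threshold p phi)%E ->
     [/\ argmin phi `<=` Fcrit (moreau p gamma phi),
         Fcrit (moreau p gamma phi) `<=` prox_fix p gamma phi,
         prox_fix p gamma phi `<=` Fcrit phi &
         Fcrit phi `<=` Mcrit phi]).
Proof.
move=> hp1 hpr hlsc; have hp : 0 < p by lra.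
split; first by move=> g hg; exact: part_a.
split; first by move=> g hg _ hinf; exact: argmin_eq.
split; first by move=> _ _ hinf g hg _; exact: argmin_eq.
split.
  move=> g hg; split; [exact: argmin_fix | exact: fix_fcrit | exact: fcrit_mcrit].
move=> _ _ hinf g hg _; split.
- exact: argmin_fcritm.
- exact: fcritm_fix.
- exact: fix_fcrit.
- exact: fcrit_mcrit.
Qed.
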